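(* Let $S$ be a semigroup with a left fairly invariant finitely-additive probability measure $\mu$, and let $T$ be a subsemigroup of $S$ with $\mu(T)>0$. Then $T$ is left fairly amenable. The same holds with ''right'' in place of ''left''.
   Context: For a semigroup $U$, $s\in U$, $A\subseteq U$: $s$ acts injectively on the left (right) of $A$ if $a\mapsto sa$ ($a\mapsto as$) is injective on $A$. A finitely-additive probability measure on $U$ is $\mu:\mathcal P(U)\to[0,1]$ with $\mu(U)=1$, additive on disjoint sets; it is left fairly invariant if $\mu(sA)=\mu(A)$ whenever $s$ acts injectively on the left of $A$ (right fairly invariant analogously with $As$). $U$ is left (right) fairly amenable if such a measure exists. *)

(* Defs.v *)
From Stdlib Require Import Reals.
Open Scope R_scope.

Definition fa_prob_measure {U : Type} (mu : (U -> Prop) -> R) : Prop :=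
  (forall A : U -> Prop, 0 <= mu A <= 1) /\
  mu (fun _ => True) = 1 /\
  (forall A B : U -> Prop, (forall x, A x -> B x -> False) ->
     mu (fun x => A x \/ B x) = mu A + mu B).

Definition acts_inj_left {U : Type} (mul : U -> U -> U) (s : U) (A : U -> Prop) : Prop :=
  forall a b, A a -> A b -> mul s a = mul s b -> a = b.

Definition acts_inj_right {U : Type} (mul : U -> U -> U) (s : U) (A : U -> Prop) : Prop :=
  forall a b, A a -> A b -> mul a s = mul b s -> a = b.

Definition lmul_set {U : Type} (mul : U -> U -> U) (s : U) (A : U -> Prop) : U -> Prop :=
  fun y => exists a, A a /\ y = mul s a.
Definition rmul_set {U : Type} (mul : U -> U -> U) (A : U -> Prop) (s : U) : U -> Prop :=
  fun y => exists a, A a /\ y = mul a s.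

Definition left_fairly_invariant {U : Type} (mul : U -> U -> U) (mu : (U -> Prop) -> R) : Prop :=
  forall s A, acts_inj_left mul s A -> mu (lmul_set mul s A) = mu A.
Definition right_fairly_invariant {U : Type} (mul : U -> U -> U) (mu : (U -> Prop) -> R) : Prop :=
  forall s A, acts_inj_right mul s A -> mu (rmul_set mul A s) = mu A.

Definition left_fairly_amenable (U : Type) (mul : U -> U -> U) : Prop :=
  exists mu : (U -> Prop) -> R, fa_prob_measure mu /\ left_fairly_invariant mul mu.
Definition right_fairly_amenable (U : Type) (mul : U -> U -> U) : Prop :=
  exists mu : (U -> Prop) -> R, fa_prob_measure mu /\ right_fairly_invariant mul mu.

Definition associative_op {U : Type} (mul : U -> U -> U) : Prop :=
  forall x y z, mul x (mul y z) = mul (mul x y) z.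

Definition mul_closed {U : Type} (mul : U -> U -> U) (T : U -> Prop) : Prop :=
  forall x y, T x -> T y -> T (mul x y).

Definition sub_mul {U : Type} (mul : U -> U -> U) (T : U -> Prop)
  (hT : mul_closed mul T) (a b : {x : U | T x}) : {x : U | T x} :=
  exist T (mul (proj1_sig a) (proj1_sig b))
    (hT _ _ (proj2_sig a) (proj2_sig b)).

(* Main.v *)
Require Import Defs.
From Stdlib Require Import Reals Lra ProofIrrelevance FunctionalExtensionality PropExtensionality Classical.
Open Scope R_scope.

Lemma set_ext {X : Type} (P Q : X -> Prop) : (forall x, P x <-> Q x) -> P = Q.
Proof. intro H; apply functional_extensionality; intro x; apply propositional_extensionality; auto. Qed.

Lemma sub_eq {U : Type} (T : U -> Prop) (a b : {x : U | T x}) :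
  proj1_sig a = proj1_sig b -> a = b.
Proof.
  destruct a as [a ha], b as [b hb]; simpl; intro E; subst b.
  f_equal; apply proof_irrelevance.
Qed.

Definition img {U : Type} (T : U -> Prop) (B : {x : U | T x} -> Prop) : U -> Prop :=
  fun y => exists b, B b /\ y = proj1_sig b.

Lemma mu_mono {U : Type} (mu : (U -> Prop) -> R) (A B : U -> Prop) :
  fa_prob_measure mu -> (forall x, A x -> B x) -> mu A <= mu B.
Proof.
  intros [H0 [H1 H2]] HAB.
  assert (E : B = (fun x => A x \/ (B x /\ ~ A x))).
  { apply set_ext; intro x; split; [intro; destruct (classic (A x)); tauto|].
    intros [h|[h _]]; auto. }
  rewrite E, H2 by (intros x ? [? ?]; tauto).
  destruct (H0 (fun x => B x /\ ~ A x)); lra.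
Qed.

Lemma nu_prob {U : Type} (mu : (U -> Prop) -> R) (T : U -> Prop) :
  fa_prob_measure mu -> 0 < mu T ->
  fa_prob_measure (fun B : {x : U | T x} -> Prop => mu (img T B) / mu T).
Proof.
  intros Hm HT. pose proof Hm as [H0 [H1 H2]]. split; [|split].
  - intro A. assert (0 <= mu (img T A)) by (apply H0).
    assert (mu (img T A) <= mu T).
    { apply mu_mono; auto. intros x [b [_ ->]]. exact (proj2_sig b). }
    split. unfold Rdiv; apply Rmult_le_pos; [lra| left; apply Rinv_0_lt_compat; lra].
    apply (Rmult_le_reg_r (mu T)); auto. unfold Rdiv. rewrite Rmult_assoc, Rinv_l; lra.
  - replace (img T (fun _ => True)) with T. field; lra.
    apply set_ext; intro x; split.
    + intro h. exists (exist T x h); auto.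
    + intros [b [_ ->]]. exact (proj2_sig b).
  - intros A B HAB.
    replace (img T (fun x => A x \/ B x)) with (fun y => img T A y \/ img T B y).
    + rewrite H2. field; lra.
      intros y [a [ha ->]] [b [hb E]]. apply sub_eq in E. subst. eauto.
    + apply set_ext; intro y; split.
      * intros [[a [ha ->]]|[a [ha ->]]]; exists a; auto.
      * intros [a [[ha|ha] ->]]; [left|right]; exists a; auto.
Qed.

Theorem mainTheorem13 (U : Type) (mul : U -> U -> U) (hassoc : associative_op mul)
  (T : U -> Prop) (hT : mul_closed mul T) :
  (forall mu : (U -> Prop) -> R,
     fa_prob_measure mu -> left_fairly_invariant mul mu -> 0 < mu T ->
     left_fairly_amenable {x : U | T x} (sub_mul mul T hT)) /\
  (forall mu : (U -> Prop) -> R,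
     fa_prob_measure mu -> right_fairly_invariant mul mu -> 0 < mu T ->
     right_fairly_amenable {x : U | T x} (sub_mul mul T hT)).
Proof.
  split; intros mu Hm Hinv HT;
    exists (fun B => mu (img T B) / mu T); split; try (apply nu_prob; auto);
    intros s A Hinj.
  - replace (img T (lmul_set (sub_mul mul T hT) s A))
      with (lmul_set mul (proj1_sig s) (img T A)).
    + rewrite Hinv; auto.
      intros y1 y2 [a1 [h1 ->]] [a2 [h2 ->]] E.
      f_equal. apply Hinj; auto. apply sub_eq. exact E.
    + apply set_ext; intro y; split.
      * intros [z [[a [ha ->]] ->]]. exists (sub_mul mul T hT s a). split; auto.
        exists a; auto.
      * intros [b [[a [ha ->]] ->]]. exists (proj1_sig a). split; auto.
        exists a; auto.
  - replace (img T (rmul_set (sub_mul mul T hT) A s))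
      with (rmul_set mul (img T A) (proj1_sig s)).
    + rewrite Hinv; auto.
      intros y1 y2 [a1 [h1 ->]] [a2 [h2 ->]] E.
      f_equal. apply Hinj; auto. apply sub_eq. exact E.
    + apply set_ext; intro y; split.
      * intros [z [[a [ha ->]] ->]]. exists (sub_mul mul T hT a s). split; auto.
        exists a; auto.
      * intros [b [[a [ha ->]] ->]]. exists (proj1_sig a). split; auto.
        exists a; auto.
Qed.
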